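(* Let $\lambda,\mu$ be partitions with at most $m$ parts, each at most $m$, such that $\mu\subset\lambda^c$ and the skew partition $\lambda^c/\mu$ is symmetric about the main diagonal. If $\lambda^c/\mu$ has an odd number of boxes strictly above its main diagonal, then its sign-imbalance is zero.
   Context: Partitions are identified with Young diagrams (sets of boxes $(i,j)$, row $i$, column $j$, with $\lambda_i$ boxes in row $i$). The complement is $\lambda^c_i=m-\lambda_{m+1-i}$ for $i=1,\dots,m$; $\mu\subset\lambda^c$ means $\mu_i\le\lambda^c_i$ for all $i$, and $\lambda^c/\mu$ is the set of boxes of $\lambda^c$ not in $\mu$. It is symmetric if invariant under $(i,j)\mapsto(j,i)$; a box is above the main diagonal if $j>i$. Partially order the boxes by letting each box be covered by its neighbors immediately to the right and immediately below; a linear extension (standard Young tableau) of shape $\lambda^c/\mu$ with $N$ boxes is a bijection from the boxes to $\{1,\dots,N\}$ increasing along this order. Fixing one linear extension $T_0$, each linear extension $T$ gives a permutation $T\circ T_0^{-1}$ of $\{1,\dots,N\}$; the sign-imbalance is the absolute value of the sum of the signs of these permutations over all linear extensions $T$. *)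

(* Defs.v *)
From mathcomp Require Import all_boot all_order all_fingroup all_algebra.
Set Implicit Arguments. Unset Strict Implicit. Unset Printing Implicit Defensive.
Import GRing.Theory Num.Theory.

(* Rows and columns are 0-indexed: row i of the paper is (i-1 : 'I_m).
   A partition with at most m parts, each at most m, is lam : 'I_m -> nat,
   weakly decreasing with values <= m. *)
Definition is_partition (m : nat) (lam : 'I_m -> nat) : Prop :=
  (forall i j : 'I_m, (i <= j)%N -> (lam j <= lam i)%N) /\
  (forall i : 'I_m, (lam i <= m)%N).

(* complement: lam^c_i = m - lam_{m+1-i} (1-indexed); 0-indexed rev_ord *)
Definition part_compl (m : nat) (lam : 'I_m -> nat) (i : 'I_m) : nat :=
  m - lam (rev_ord i).

Definition subpart (m : nat) (mu nu : 'I_m -> nat) : Prop :=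
  forall i : 'I_m, (mu i <= nu i)%N.

Definition skew_shape (m : nat) (nu mu : 'I_m -> nat) : {set 'I_m * 'I_m} :=
  [set b : 'I_m * 'I_m | (mu b.1 <= b.2)%N && (b.2 < nu b.1)%N].

Definition symmetric_shape (m : nat) (S : {set 'I_m * 'I_m}) : Prop :=
  forall i j : 'I_m, ((i, j) \in S) = ((j, i) \in S).

Definition above_diag (m : nat) (S : {set 'I_m * 'I_m}) : {set 'I_m * 'I_m} :=
  [set b in S | (b.1 < b.2)%N].

Definition covers (m : nat) (b b' : 'I_m * 'I_m) : bool :=
  ((b'.1 == b.1) && (b'.2 == b.2.+1 :> nat)) ||
  ((b'.2 == b.2) && (b'.1 == b.1.+1 :> nat)).

(* A linear extension T of S, a bijection S -> {1..N}, is encoded by the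
   permutation s of 'I_N (N = #|S|) with T (enum_val k) = s k + 1, where
   enum_val enumerates S. *)
Definition lin_ext (m : nat) (S : {set 'I_m * 'I_m}) (s : 'S_#|S|) : bool :=
  [forall k : 'I_#|S|, forall l : 'I_#|S|,
     covers (enum_val k) (enum_val l) ==> (s k < s l)%N].

(* sign-imbalance computed with respect to the fixed linear extension s0:
   | sum over linear extensions s of sign(s * s0^-1) |
   (s * s0^-1 corresponds to T o T0^-1). *)
Definition sign_imbalance (m : nat) (S : {set 'I_m * 'I_m}) (s0 : 'S_#|S|) : int :=
  `| \sum_(s : 'S_#|S| | lin_ext s) (-1) ^+ (odd_perm (s0^-1 * s)%g) |%R.

(* Main.v *)
Require Import Defs.
From mathcomp Require Import all_boot all_order all_fingroup all_algebra.
From mathcomp Require Import zify.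
Set Implicit Arguments. Unset Strict Implicit. Unset Printing Implicit Defensive.
Import GRing.Theory Num.Theory.

Lemma odd_perm_invol (T : finType) (n : nat) : forall (t : {perm T}) (A : {set T}),
  #|A| = n -> (forall x, t (t x) = x) -> (forall x, x \in A -> t x != x) ->
  (forall x, t x != x -> (x \in A) != (t x \in A)) -> odd_perm t = odd n.
Proof.
elim: n => [|n IH] t A HA Hinv HA1 HA2.
  have A0 : A = set0 by apply/eqP; rewrite -cards_eq0 HA.
  have -> : t = 1%g.
    apply/permP => x; rewrite perm1; apply/eqP; apply/negPn/negP => H.
    by have := HA2 x H; rewrite A0 !inE.
  by rewrite odd_perm1.
have : (0 < #|A|)%N by rewrite HA.
rewrite card_gt0 => /set0Pn [a Ha].
have Hta : t a != a := HA1 a Ha.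
have HtaA : t a \notin A by have := HA2 a Hta; rewrite Ha.
set t' := (tperm a (t a) * t)%g.
have Ht' : forall x, t' x = if (x == a) || (x == t a) then x else t x.
  move=> x; rewrite permM; case: (tpermP a (t a) x) => [->|->|Hxa Hxta].
  - by rewrite eqxx /= Hinv.
  - by rewrite eqxx orbT.
  - by rewrite (introF eqP Hxa) (introF eqP Hxta).
have Hinj : forall x y, t x = t y -> x = y.
  by move=> x y H; rewrite -(Hinv x) H Hinv.
have IH' : odd_perm t' = odd n.
  apply: (IH t' (A :\ a)).
  - by move: HA; rewrite (cardsD1 a A) Ha => -[].
  - move=> x; rewrite [t' x]Ht'.
    case: ifP => Hx; first by rewrite Ht' Hx.
    rewrite Ht' Hinv; case: ifP => // /orP [/eqP H|/eqP H].
      by move: Hx; rewrite -H Hinv eqxx orbT.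
    by move: Hx; rewrite (Hinj _ _ H) eqxx.
  - move=> x; rewrite !inE => /andP [Hxa HxA]; rewrite Ht' (negbTE Hxa) /=.
    have Hxta : x != t a by apply/eqP => E; move: HxA; rewrite E (negbTE HtaA).
    by rewrite (negbTE Hxta) HA1.
  - move=> x; rewrite Ht'; case: ifP => Hx; first by rewrite eqxx.
    move=> Htx; have := HA2 x Htx.
    move/negbT: Hx; rewrite negb_or => /andP [Hxa Hxta].
    have Htxa : t x != a by apply/eqP => E; move: Hxta; rewrite -E Hinv eqxx.
    have Htxta : t x != t a by apply/eqP => E; move: Hxa; rewrite (Hinj _ _ E) eqxx.
    by rewrite !inE Hxa Htxa.
move: IH'; rewrite /t' odd_permM odd_tperm eq_sym Hta /= => H.
by rewrite -H negbK.
Qed.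

Definition swapb (m : nat) (b : 'I_m * 'I_m) := (b.2, b.1).

Lemma covers_swap (m : nat) (b b' : 'I_m * 'I_m) :
  covers (swapb b) (swapb b') = covers b b'.
Proof. by case: b b' => [i j] [i' j']; rewrite /covers /= orbC. Qed.

Lemma main_gen (m : nat) (S : {set 'I_m * 'I_m}) :
  symmetric_shape S -> odd #|above_diag S| ->
  forall s0 : 'S_#|S|, sign_imbalance s0 = 0%R.
Proof.
move=> Hsym Hodd s0.
have [b0 Hb0] : exists b0, b0 \in S.
  have : (0 < #|above_diag S|)%N by case: #|_| Hodd.
  by rewrite card_gt0 => /set0Pn [b]; rewrite inE => /andP [Hb _]; exists b.
have Hsw : forall b, b \in S -> swapb b \in S.
  by case=> i j; rewrite Hsym.
pose f (k : 'I_#|S|) := enum_rank_in Hb0 (swapb (enum_val k)).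
have Hf : forall k, enum_val (f k) = swapb (enum_val k).
  by move=> k; rewrite /f enum_rankK_in // Hsw // enum_valP.
have ff : forall k, f (f k) = k.
  by move=> k; apply: enum_val_inj; rewrite !Hf; case: (enum_val k).
pose t := perm (can_inj ff).
have tE : forall k, t k = f k by move=> k; rewrite permE.
have Hlin : forall s, lin_ext s -> lin_ext (t * s)%g.
  move=> s Hs; apply/forallP => k; apply/forallP => l; apply/implyP => H.
  rewrite !permM !tE.
  move/forallP/(_ (f k))/forallP/(_ (f l))/implyP: Hs; apply.
  by rewrite !Hf covers_swap.
have tt : (t * t = 1)%g by apply/permP => k; rewrite permM !tE ff perm1.
have Hlin' : forall s, lin_ext (t * s)%g = lin_ext s.
  move=> s; apply/idP/idP; last exact: Hlin.
  by move/Hlin; rewrite mulgA tt mul1g.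
have Hodt : odd_perm t.
  pose A := [set k : 'I_#|S| | ((enum_val k).1 < (enum_val k).2)%N].
  have HA : #|A| = #|above_diag S|.
    rewrite -(card_imset _ enum_val_inj); apply: eq_card => b.
    rewrite /above_diag !inE; apply/imsetP/andP.
      by move=> [k Hk ->]; split; [exact: enum_valP | move: Hk; rewrite inE].
    move=> [Hb Hlt]; exists (enum_rank_in Hb0 b); last by rewrite enum_rankK_in.
    by rewrite inE enum_rankK_in.
  rewrite (odd_perm_invol (n := #|above_diag S|) (A := A)) //.
  - by move=> x; rewrite !tE ff.
  - move=> x; rewrite inE tE => Hx; apply/eqP => E.
    have := Hf x; rewrite E; case: (enum_val x) Hx => i j /= Hx [] Eij _.
    by move: Hx; rewrite Eij ltnn.
  - move=> x; rewrite tE !inE Hf => Hx.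
    have Hne : enum_val (f x) != enum_val x by apply: contra Hx => /eqP/enum_val_inj ->.
    move: Hne; rewrite Hf; case: (enum_val x) => i j /=.
    rewrite /swapb /= => Hne.
    have Hij : (i : nat) != j.
      by apply: contra Hne => /eqP/val_inj ->.
    by case: (ltngtP i j) Hij => //; rewrite eqxx.
rewrite /sign_imbalance.
set X := (\sum_(s | lin_ext s) _)%R.
have HX : X = (- X)%R.
  rewrite {1}/X (reindex_inj (mulgI t)) /= -sumrN; apply: eq_big => s.
    by rewrite Hlin'.
  move=> _; rewrite mulgA !odd_permM Hodt.
  by case: (odd_perm s0^-1); case: (odd_perm s); rewrite /= ?expr0 ?expr1 ?opprK.
have -> : X = 0%R by lia.
by rewrite normr0.
Qed.

Theorem lemma4p9 (m : nat) (lam mu : 'I_m -> nat) :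
  is_partition lam -> is_partition mu ->
  subpart mu (part_compl lam) ->
  symmetric_shape (skew_shape (part_compl lam) mu) ->
  ssrnat.odd #|above_diag (skew_shape (part_compl lam) mu)| ->
  forall s0 : 'S_#|skew_shape (part_compl lam) mu|,
    lin_ext s0 -> sign_imbalance s0 = 0%R.
Proof.
move=> _ _ _ Hsym Hodd s0 _; exact: main_gen.
Qed.
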